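(* Consider the networked feedback system described in the context, under the input assumption stated there. Then for any integers $k_1\ge k_2\ge 0$, the random variable $\tau_{k_1}$ is independent of the channel inputs $u(k_1)$ and $u(k_2)$.
   Context: Setting: $P$ is a single-input single-output discrete-time linear time-invariant plant which is strictly proper (relative degree $\ge 1$), and $K$ is a proper SISO LTI controller. Let $\tau\ge0$ be an integer, $\mathcal D=\{0,\dots,\tau\}$, and $\{\tau_n\}$ an i.i.d. sequence with values in $\mathcal D$, $\Pr\{\tau_n=i\}=p_i$, $\sum_i p_i=1$ ($\tau_n$ is the delay of the datum sent at time $n$). With fixed real weights $\alpha_0,\dots,\alpha_\tau$ and Kronecker delta $\delta$, the channel maps its input $u$ to $u_d(k)=\sum_{i=0}^{\tau}\alpha_i\delta(\tau_{k-i}-i)u(k-i)$. The closed loop is: plant input $v(k)-u_d(k)$, plant output $y=P(v-u_d)$, controller output $u=Ky$; all signals are real and the system is at rest at $k=0$ (all signals vanish for $k<0$). Input assumption: $\{\tau_n\}$ is independent of $\{v(k)\}$, and $\{v(k)\}$ is a zero-mean white noise (independent values) with bounded variances $\sigma_v^2(k)$. *)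

(* Defs.v *)
From HB Require Import structures.
From mathcomp Require Import all_boot all_order all_algebra.
From mathcomp Require Import all_classical all_reals all_analysis.
Set Implicit Arguments. Unset Strict Implicit. Unset Printing Implicit Defensive.
Import Order.TTheory GRing.Theory Num.Theory.
Local Open Scope classical_set_scope.
Local Open Scope ring_scope.

Section independence.
Context d (T : measurableType d) (R : realType) (P : probability T R).
Local Open Scope ereal_scope.

Definition rv_events d' (U : measurableType d') (X : T -> U) : set (set T) :=
  [set X @^-1` B | B in measurable].

Definition mutually_independent (I : eqType) (F : I -> set (set T)) :=
  forall (J : seq I) (E : I -> set T), uniq J ->
    (forall i, i \in J -> F i (E i)) ->
    P (\big[setI/setT]_(i <- J) E i) = \prod_(i <- J) P (E i).

(* independence of two families of sigma-algebras (i.e. of the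
   sigma-algebras they generate): every finite intersection of events of
   the first family is independent of every finite intersection of events
   of the second family *)
Definition independent_families (I1 I2 : eqType)
    (F1 : I1 -> set (set T)) (F2 : I2 -> set (set T)) :=
  forall (J1 : seq I1) (J2 : seq I2) (E1 : I1 -> set T) (E2 : I2 -> set T),
    (forall i, i \in J1 -> F1 i (E1 i)) ->
    (forall i, i \in J2 -> F2 i (E2 i)) ->
    P ((\big[setI/setT]_(i <- J1) E1 i) `&` (\big[setI/setT]_(j <- J2) E2 j))
    = P (\big[setI/setT]_(i <- J1) E1 i) * P (\big[setI/setT]_(j <- J2) E2 j).

Definition independent_rv d1 d2 (U1 : measurableType d1)
    (U2 : measurableType d2) (X : T -> U1) (Y : T -> U2) :=
  forall (A : set U1) (B : set U2), measurable A -> measurable B ->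
    P (X @^-1` A `&` Y @^-1` B) = P (X @^-1` A) * P (Y @^-1` B).

End independence.

(* Main.v *)
Require Import Defs.
From HB Require Import structures.
From mathcomp Require Import all_boot all_order all_algebra.
From mathcomp Require Import all_classical all_reals all_analysis.
From mathcomp Require Import measurable_realfun.
Import Order.TTheory GRing.Theory Num.Theory.
Local Open Scope classical_set_scope.
Local Open Scope ring_scope.

Section h.
Context (d : measure_display) (T : measurableType d) (R : realType) (P : probability T R).
Local Open Scope ereal_scope.

Lemma indep_gen (S : set (set T)) (E : set T) : measurable E -> S `<=` measurable ->
  setI_closed S -> S setT -> (forall X, S X -> P (E `&` X) = P E * P X) ->
  forall X, <<s S>> X -> P (E `&` X) = P E * P X.
Proof.
move=> mE Sm SI ST SE.
have r0 : (0 <= fine (P E))%R by apply: fine_ge0; apply: measure_ge0.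
pose r : {nonneg R} := NngNum r0.
have PEfin : P E \is a fin_num by apply: fin_num_measure.
move=> X sX.
have := @g_sigma_algebra_measure_unique _ R T S Sm (fun=> setT) (fun=> ST) (bigcup_const _ _) (mrestr P mE) (mscale r P) SI.
have rE : (r%:num)%:E = P E by rewrite /= fineK.
move=> H.
have H1 : mrestr P mE X = mscale r P X.
  apply: H => //.
  - move=> A SA; rewrite /mrestr /mscale rE /=.
    change (P (A `&` E) = (r%:num)%:E * P A).
    by rewrite rE setIC SE.
  - move=> _; change (P (setT `&` E) < +oo); rewrite setTI.
    by rewrite ltey_eq fin_num_measure.
change (P (X `&` E) = (r%:num)%:E * P X) in H1.
move: H1; rewrite rE => <-.
by rewrite setIC.
Qed.
End h.

Section A.
Context (d : measure_display) (T : measurableType d) (R : realType)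
  (P : probability T R) (tau : nat -> T -> nat) (v : nat -> T -> R).
Hypothesis Hmi : mutually_independent P (fun n => rv_events (tau n)).
Hypothesis Hind : independent_families P (fun n => rv_events (tau n)) (fun k => rv_events (v k)).
Local Open Scope ereal_scope.

Definition SS (n : nat) : set (set T) :=
  [set X | exists (A : nat -> set nat) (B : nat -> set R),
     (forall i, measurable (B i)) /\
     X = \big[setI/setT]_(i <- iota 0 n) (tau i @^-1` A i `&` v i @^-1` B i)].

Lemma prodS n (A0 : set nat) X : SS n X ->
  P (tau n @^-1` A0 `&` X) = P (tau n @^-1` A0) * P X.
Proof.
move=> [A [B [mB ->]]].
set s := iota 0 n.
set T0 := tau n @^-1` A0.
pose E1 i := tau i @^-1` A i.
pose E2 i := v i @^-1` B i.
pose E1' i := if i == n then T0 else E1 i.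
rewrite big_split /=.
have h1 : \big[setI/setT]_(i <- n :: s) E1' i = T0 `&` \big[setI/setT]_(i <- s) E1 i.
  rewrite big_cons /E1' eqxx; congr (_ `&` _).
  apply: eq_big_seq => i; rewrite mem_iota add0n => /andP[_ lin].
  by rewrite (ltn_eqF lin).
have us : uniq s by apply: iota_uniq.
have uns : uniq (n :: s) by rewrite /= us andbT mem_iota add0n ltnn andbF.
have mN : forall Y : set nat, measurable Y by move=> Y; exact: I.
have E1'ev : forall i, i \in n :: s -> rv_events (tau i) (E1' i).
  move=> i _; rewrite /E1'; case: eqP => [->|_].
    by exists A0 => //; apply: mN.
  by exists (A i) => //; apply: mN.
have E1ev : forall i, i \in s -> rv_events (tau i) (E1 i) by move=> i _; exists (A i) => //; apply: mN.
have E2ev : forall i, i \in s -> rv_events (v i) (E2 i) by move=> i _; exists (B i).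
have indt : P (T0 `&` \big[setI/setT]_(i <- s) E1 i) = P T0 * P (\big[setI/setT]_(i <- s) E1 i).
  rewrite -h1 (Hmi (n :: s) E1' uns E1'ev) big_cons /E1' eqxx (Hmi s E1 us E1ev); congr (_ * _).
  apply: eq_big_seq => i; rewrite mem_iota add0n => /andP[_ lin].
  by rewrite (ltn_eqF lin).
rewrite setIA -h1 (Hind (n :: s) s E1' E2 E1'ev E2ev) h1 indt -muleA -(Hind s s E1 E2 E1ev E2ev).
by [].
Qed.

Hypothesis Htm : forall n, measurable_fun setT (tau n).
Hypothesis Hvm : forall k, measurable_fun setT (v k).

Lemma SS_setI n : setI_closed (SS n).
Proof.
move=> X Y [A [B [mB ->]]] [A' [B' [mB' ->]]].
exists (fun i => A i `&` A' i), (fun i => B i `&` B' i); split.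
  by move=> i; apply: measurableI.
rewrite -big_split /=; apply: eq_bigr => i _.
by rewrite !preimage_setI setIACA.
Qed.

Lemma SS_T n : SS n setT.
Proof.
exists (fun=> setT), (fun=> setT); split => //.
by rewrite big1 // => i _; rewrite !preimage_setT setTI.
Qed.

Lemma SS_meas n : SS n `<=` measurable.
Proof.
move=> X [A [B [mB ->]]].
apply: (big_ind (fun X => measurable X)) => //.
- by move=> ? ? ? ?; apply: measurableI.
- move=> i _; apply: measurableI.
  + rewrite -[_ @^-1` _]setTI; apply: (Htm i measurableT); exact: I.
  + rewrite -[_ @^-1` _]setTI; exact: (Hvm i measurableT).
Qed.

Lemma SS_tau n j (Y : set nat) : (j < n)%N -> SS n (tau j @^-1` Y).
Proof.
move=> jn.
exists (fun i => if i == j then Y else setT), (fun=> setT); split => //.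
have jin : j \in iota 0 n by rewrite mem_iota add0n.
rewrite (bigD1_seq j jin (iota_uniq 0 n)) /= eqxx big1 ?setIT ?preimage_setT ?setIT //.
by move=> i /negbTE ->; rewrite !preimage_setT setIT.
Qed.

Lemma SS_v n j (Y : set R) : (j < n)%N -> measurable Y -> SS n (v j @^-1` Y).
Proof.
move=> jn mY.
exists (fun=> setT), (fun i => if i == j then Y else setT); split.
  by move=> i; case: ifP.
have jin : j \in iota 0 n by rewrite mem_iota add0n.
rewrite (bigD1_seq j jin (iota_uniq 0 n)) /= eqxx big1 ?setIT ?preimage_setT ?setTI //.
by move=> i /negbTE ->; rewrite !preimage_setT setIT.
Qed.

End A.

Set Implicit Arguments. Unset Strict Implicit.
Section B.
Context (d : measure_display) (T : measurableType d) (R : realType)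
  (P : probability T R) (taumax : nat) (alpha : nat -> R)
  (tau : nat -> T -> nat) (v : nat -> T -> R)
  (np : nat) (A : 'M[R]_np) (B : 'cV[R]_np) (C : 'rV[R]_np)
  (nc : nat) (Ak : 'M[R]_nc) (Bk : 'cV[R]_nc) (Ck : 'rV[R]_nc) (Dk : R)
  (xp : nat -> T -> 'cV[R]_np) (xc : nat -> T -> 'cV[R]_nc)
  (y u ud : nat -> T -> R).
Hypothesis Hvm : forall k, measurable_fun setT (v k).
Hypothesis Hxp0 : forall w, xp 0%N w = 0.
Hypothesis HxpS : forall k w, xp k.+1 w = A *m xp k w + (v k w - ud k w) *: B.
Hypothesis Hy : forall k w, y k w = (C *m xp k w) 0 0.
Hypothesis Hxc0 : forall w, xc 0%N w = 0.
Hypothesis HxcS : forall k w, xc k.+1 w = Ak *m xc k w + y k w *: Bk.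
Hypothesis Hu : forall k w, u k w = (Ck *m xc k w) 0 0 + Dk * y k w.
Hypothesis Hud : forall k w, ud k w =
     \sum_(i < taumax.+1 | (i <= k)%N)
        alpha i * (tau (k - i)%N w == i)%:R * u (k - i)%N w.

Variable n : nat.
Let T' := g_sigma_algebraType (@SS _ T R tau v n).
Let mf (f : T -> R) := measurable_fun (setT : set T') f.

Lemma mf_v j : (j < n)%N -> mf (v j).
Proof.
move=> jn _ Y mY; rewrite setTI; apply: sub_sigma_algebra; exact: SS_v.
Qed.

Lemma mf_ind j i : (j < n)%N -> mf (fun w => (tau j w == i)%:R).
Proof.
move=> jn.
apply: (@measurableT_comp _ _ _ T' _ _ (fun m : nat => (m == i)%:R : R) setT (tau j)).
  by move=> _ Y _; exact: I.
move=> _ Y _; rewrite setTI; apply: sub_sigma_algebra; exact: SS_tau.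
Qed.

Lemma mf_cst (r : R) : mf (fun=> r).
Proof. exact: measurable_cst. Qed.

Lemma mfD f g : mf f -> mf g -> mf (fun w => f w + g w).
Proof. exact: (@measurable_funD _ T' R setT f g). Qed.
Lemma mfB f g : mf f -> mf g -> mf (fun w => f w - g w).
Proof. exact: (@measurable_funB _ T' R setT f g). Qed.
Lemma mfM f g : mf f -> mf g -> mf (fun w => f w * g w).
Proof. exact: (@measurable_funM _ T' R setT f g). Qed.
Lemma mfsum (I : Type) (s : seq I) (h : I -> T -> R) :
  (forall i, mf (h i)) -> mf (fun w => \sum_(i <- s) h i w).
Proof. exact: (@measurable_sum _ T' R setT I s h). Qed.

Let H k := (forall i, mf (fun w => xp k w i 0)) /\ (forall i, mf (fun w => xc k w i 0)).

Lemma mf_y k : H k -> mf (y k).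
Proof.
move=> [Hp _].
have -> : y k = fun w => \sum_(j < np) C 0 j * xp k w j 0.
  by apply: funext => w; rewrite Hy mxE.
apply: mfsum => j; apply: mfM => //; exact: mf_cst.
Qed.

Lemma mf_u k : H k -> mf (u k).
Proof.
move=> Hk; have [_ Hc] := Hk.
have -> : u k = fun w => \sum_(j < nc) Ck 0 j * xc k w j 0 + Dk * y k w.
  by apply: funext => w; rewrite Hu mxE.
apply: mfD.
  apply: mfsum => j; apply: mfM => //; exact: mf_cst.
apply: mfM; [exact: mf_cst | exact: mf_y].
Qed.

Lemma mf_H k : (k <= n)%N -> forall j, (j <= k)%N -> H j.
Proof.
elim: k => [_ j|k IH kn j].
  rewrite leqn0 => /eqP ->; split => i.
    by rewrite (_ : (fun w => _) = fun=> 0); [exact: mf_cst | apply: funext => w; rewrite Hxp0 mxE].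
  by rewrite (_ : (fun w => _) = fun=> 0); [exact: mf_cst | apply: funext => w; rewrite Hxc0 mxE].
rewrite leq_eqVlt => /orP[/eqP ->|]; last by rewrite ltnS; apply: IH; apply: ltnW.
have IH' := IH (ltnW kn).
have Hk := IH' k (leqnn k).
have mud : mf (ud k).
  have -> : ud k = fun w => \sum_(i < taumax.+1)
      (if (i <= k)%N then alpha i * (tau (k - i)%N w == i)%:R * u (k - i)%N w else 0).
    by apply: funext => w; rewrite Hud big_mkcond.
  apply: mfsum => i /=; case ik: (i <= k)%N; last exact: mf_cst.
  apply: mfM; last by apply: mf_u; apply: IH'; apply: leq_subr.
  apply: mfM; first exact: mf_cst.
  apply: mf_ind; rewrite (leq_ltn_trans (leq_subr _ _)) //.
split => i.
  have -> : (fun w => xp k.+1 w i 0) = fun w =>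
     \sum_(l < np) A i l * xp k w l 0 + (v k w - ud k w) * B i 0.
    by apply: funext => w; rewrite HxpS !mxE.
  apply: mfD.
    apply: mfsum => l; apply: mfM; [exact: mf_cst | exact: Hk.1].
  apply: mfM; last exact: mf_cst.
  by apply: mfB => //; exact: mf_v.
have -> : (fun w => xc k.+1 w i 0) = fun w =>
   \sum_(l < nc) Ak i l * xc k w l 0 + y k w * Bk i 0.
  by apply: funext => w; rewrite HxcS !mxE.
apply: mfD.
  apply: mfsum => l; apply: mfM; [exact: mf_cst | exact: Hk.2].
by apply: mfM; [exact: mf_y | exact: mf_cst].
Qed.

End B.
Unset Implicit Arguments. Set Strict Implicit.

Theorem lemma3
  (* probability space *)
  (d : measure_display) (T : measurableType d) (R : realType)
  (P : probability T R)
  (* maximal delay tau, probabilities p_i, channel weights alpha_i *)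
  (taumax : nat) (p : nat -> R) (alpha : nat -> R)
  (* delay sequence {tau_n} and exogenous input {v(k)} *)
  (tau : nat -> T -> nat) (v : nat -> T -> R)
  (* plant P: strictly proper SISO LTI, state-space realization (A,B,C), D = 0 *)
  (np : nat) (A : 'M[R]_np) (B : 'cV[R]_np) (C : 'rV[R]_np)
  (* controller K: proper SISO LTI, state-space data (Ak,Bk,Ck,Dk) *)
  (nc : nat) (Ak : 'M[R]_nc) (Bk : 'cV[R]_nc) (Ck : 'rV[R]_nc) (Dk : R)
  (* closed-loop signals (pathwise) *)
  (xp : nat -> T -> 'cV[R]_np) (xc : nat -> T -> 'cV[R]_nc)
  (y u ud : nat -> T -> R) :
  (* {tau_n}: i.i.d., values in {0,...,taumax}, Pr{tau_n = i} = p_i *)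
  (forall n, measurable_fun setT (tau n)) ->
  (forall n w, (tau n w <= taumax)%N) ->
  (forall n i, P (tau n @^-1` [set i]) = (p i)%:E) ->
  \sum_(i < taumax.+1) p i = 1 ->
  mutually_independent P (fun n => rv_events (tau n)) ->
  (* {v(k)}: zero-mean white noise with bounded variances *)
  (forall k, measurable_fun setT (v k)) ->
  mutually_independent P (fun k => rv_events (v k)) ->
  (forall k, v k \in Lfun P 2) ->
  (forall k, ('E_P[v k] = 0)%E) ->
  (exists M : R, forall k, ('V_P[v k] <= M%:E)%E) ->
  (* {tau_n} independent of {v(k)} *)
  independent_families P (fun n => rv_events (tau n)) (fun k => rv_events (v k)) ->
  (* plant y = P(v - u_d), at rest at k = 0 *)
  (forall w, xp 0%N w = 0) ->
  (forall k w, xp k.+1 w = A *m xp k w + (v k w - ud k w) *: B) ->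
  (forall k w, y k w = (C *m xp k w) 0 0) ->
  (* controller u = K y, at rest at k = 0 *)
  (forall w, xc 0%N w = 0) ->
  (forall k w, xc k.+1 w = Ak *m xc k w + y k w *: Bk) ->
  (forall k w, u k w = (Ck *m xc k w) 0 0 + Dk * y k w) ->
  (* channel: u_d(k) = sum_{i=0}^{tau} alpha_i delta(tau_{k-i} - i) u(k-i),
     terms with k - i < 0 vanish *)
  (forall k w, ud k w =
     \sum_(i < taumax.+1 | (i <= k)%N)
        alpha i * (tau (k - i)%N w == i)%:R * u (k - i)%N w) ->
  forall k1 k2 : nat, (k2 <= k1)%N ->
    independent_rv P (tau k1) (fun w => (u k1 w, u k2 w)).
Proof.
move=> Htm Hle HP Hsum Hmi Hvm Hvmi HL2 HE HV Hind Hxp0 HxpS Hy Hxc0 HxcS Hu Hud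
  k1 k2 k21 Y Z mY mZ.
have Hk1 := mf_H Hxp0 HxpS Hy Hxc0 HxcS Hu Hud (leqnn k1) (leqnn k1).
have Hk2 := mf_H Hxp0 HxpS Hy Hxc0 HxcS Hu Hud (leqnn k1) k21.
have mu1 := mf_u Hy Hu Hk1.
have mu2 := mf_u Hy Hu Hk2.
have mp := measurable_fun_pair mu1 mu2.
have sZ : <<s SS d T R tau v k1 >> ((fun w => (u k1 w, u k2 w)) @^-1` Z).
  by have := mp measurableT Z mZ; rewrite setTI.
have mE : measurable (tau k1 @^-1` Y).
  by have := Htm k1 measurableT Y mY; rewrite setTI.
exact: (@indep_gen _ _ _ P _ _ mE (SS_meas _ _ _ tau v Htm Hvm k1) (SS_setI _ _ _ tau v k1)
  (SS_T _ _ _ tau v k1) (fun X SX => @prodS _ _ _ P tau v Hmi Hind k1 Y X SX) _ sZ).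
Qed.
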